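(* Let $X$ be a compact metrizable space, let $f\in\mathrm{C}(X)$ be self-adjoint, and let $\varepsilon>0$. Then there exist $n\in\mathbb N$, $\delta>0$ and self-adjoint $f_1,\dots,f_n\in\mathrm{C}(X)$ such that $\|f-f_i\|_\infty<\varepsilon$ for $i=1,\dots,n$, and $\frac1n\,|\{1\le i\le n:|f_i(x)|<\delta\}|<\varepsilon$ for all $x\in X$. In particular, $\frac1n(\tau(\chi_\delta(f_1))+\cdots+\tau(\chi_\delta(f_n)))<\varepsilon$ for every tracial state $\tau$ of $\mathrm{C}(X)$.
   Context: $\chi_\delta\colon\mathbb R\to\mathbb R$ is the continuous function equal to $1$ on $\{|t|<\delta/2\}$, $0$ on $\{|t|>\delta\}$, and linear otherwise. *)

(* Defs.v *)
From HB Require Import structures.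
From mathcomp Require Import all_boot all_order all_algebra.
From mathcomp Require Import all_classical all_reals all_analysis.
From mathcomp Require Import complex.
Set Implicit Arguments. Unset Strict Implicit. Unset Printing Implicit Defensive.
Import Order.TTheory GRing.Theory Num.Theory.
Import numFieldNormedType.Exports.
Local Open Scope classical_set_scope.
Local Open Scope ring_scope.

Definition chi {R : realType} (delta t : R) : R :=
  if `|t| < delta / 2 then 1
  else if delta < `|t| then 0
  else (delta - `|t|) / (delta - delta / 2).

Definition sup_norm {R : realType} {X : Type} (g : X -> R) : R :=
  sup [set `|g x| | x in [set: X]].

Definition ccontinuous {R : realType} {X : topologicalType} (g : X -> R[i]) :=
  continuous (fun x => complex.Re (g x)) /\ continuous (fun x => complex.Im (g x)).

(* tracial state on C(X) = continuous functions X -> C, given as a map on all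
   functions X -> C, constrained on the continuous ones *)
Definition tracial_state {R : realType} {X : topologicalType}
  (tau : (X -> R[i]) -> R[i]) : Prop :=
  [/\ (forall (a : R[i]) (g h : X -> R[i]), ccontinuous g -> ccontinuous h ->
         tau (fun x => a * g x + h x) = a * tau g + tau h),
      (forall g : X -> R[i], ccontinuous g -> (forall x, 0 <= g x) -> 0 <= tau g),
      tau (fun _ => 1) = 1 &
      (forall g h : X -> R[i], ccontinuous g -> ccontinuous h ->
         tau (fun x => g x * h x) = tau (fun x => h x * g x))].

(* Main.v *)
Require Import Defs.
From HB Require Import structures.
From mathcomp Require Import all_boot all_order all_algebra.
From mathcomp Require Import all_classical all_reals all_analysis.
From mathcomp Require Import complex ring lra.
Import Order.TTheory GRing.Theory Num.Theory.
Import numFieldNormedType.Exports.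
Local Open Scope classical_set_scope.
Local Open Scope ring_scope.

Lemma chiE (R : realType) (d t : R) : 0 < d ->
  chi d t = Num.min 1 (Num.max 0 ((d - `|t|) / (d / 2))).
Proof.
move=> d0; rewrite /chi.
have h2 : d - d / 2 = d / 2 by field.
rewrite h2.
have d2 : 0 < d / 2 by rewrite divr_gt0.
set x := (d - `|t|) / (d / 2).
have hx1 : (1 < x) = (`|t| < d / 2).
  by rewrite /x ltr_pdivlMr // mul1r; apply/idP/idP => ?; lra.
have hx0 : (x < 0) = (d < `|t|).
  by rewrite /x ltr_pdivrMr // mul0r; apply/idP/idP => ?; lra.
case: ifPn => [lt|nlt].
  have : 1 < x by rewrite hx1.
  move=> h; rewrite (@max_r _ _ 0 x); last lra.
  by rewrite min_l //; lra.
case: ifPn => [lt|nlt2].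
  have : x < 0 by rewrite hx0.
  by move=> h; rewrite max_l; [rewrite min_r|]; lra.
have h1 : x <= 1 by rewrite leNgt hx1.
have h0 : 0 <= x by rewrite leNgt hx0.
by rewrite max_r // min_r.
Qed.

Lemma chi_cont (R : realType) (d : R) : 0 < d -> continuous (chi d).
Proof.
move=> d0.
have -> : chi d = (fun t => Num.min 1 (Num.max 0 ((d - `|t|) / (d / 2)))).
  by apply: funext => t; rewrite chiE.
move=> t.
apply: (@continuous_min R R (fun _ => 1) (fun t => Num.max 0 ((d - `|t|) / (d / 2)))).
  exact: cst_continuous.
apply: (@continuous_max R R (fun _ => 0)).
  exact: cst_continuous.
apply: continuousM; last exact: cst_continuous.
apply: continuousB; first exact: cst_continuous.
exact: norm_continuous.
Qed.

Lemma chi_le (R : realType) (d t : R) : 0 < d -> chi d t <= (if `|t| <= d then 1 else 0).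
Proof.
move=> d0; case: ifPn => h.
  by rewrite chiE // ge_min lexx.
rewrite /chi; rewrite -ltNge in h.
have -> : (`|t| < d / 2) = false by apply/negbTE; rewrite -leNgt; lra.
by rewrite h.
Qed.

Lemma card_small (R : realType) (n : nat) (a s d : R) (P : pred 'I_n) :
  0 < s -> 2 * d < s -> (forall i : 'I_n, P i -> `|a + (i : nat)%:R * s| <= d) ->
  (#|P| <= 1)%N.
Proof.
move=> s0 ds hP; apply/card_le1_eqP => i j Pi Pj.
have := hP i Pi; have := hP j Pj.
rewrite !ler_norml => /andP[h1 h2] /andP[h3 h4].
apply: val_inj; case: (ltngtP i j) => [lt|lt|//]; exfalso.
  have : (i : nat).+1%:R <= (j : nat)%:R :> R by rewrite ler_nat.
  rewrite -natr1 => hij; nra.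
have : (j : nat).+1%:R <= (i : nat)%:R :> R by rewrite ler_nat.
rewrite -natr1 => hij; nra.
Qed.

Lemma sum_cont (R : realType) (X : topologicalType) (k : nat) (h : nat -> X -> R) :
  (forall j, continuous (h j)) -> continuous (fun x => \sum_(j < k) h j x).
Proof.
move=> hc; elim: k => [|k IH].
  under eq_fun do rewrite big_ord0. exact: cst_continuous.
under eq_fun do rewrite big_ord_recr /=.
move=> x; apply: continuousD; [exact: IH | exact: hc].
Qed.

Lemma ccont_real (R : realType) (X : topologicalType) (h : X -> R) :
  continuous h -> ccontinuous (fun x => (h x)%:C%C).
Proof.
move=> hc; split => /=; first exact: hc.
exact: cst_continuous.
Qed.

Lemma tau_sum (R : realType) (X : topologicalType) (tau : (X -> R[i]) -> R[i])
  (ht : tracial_state tau) (k : nat) (h : nat -> X -> R) :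
  (forall j, continuous (h j)) ->
  tau (fun x => \sum_(j < k) (h j x)%:C%C) = \sum_(j < k) tau (fun x => (h j x)%:C%C).
Proof.
case: ht => lin _ _ _ hc; elim: k => [|k IH].
  rewrite big_ord0.
  have := lin 1 (fun _ => 0) (fun _ => 0) (@ccont_real _ _ _ (@cst_continuous X R 0))
     (@ccont_real _ _ _ (@cst_continuous X R 0)).
  rewrite /= mul1r addr0 => e.
  have e2 : tau (fun _ => 0) = 0.
    apply: (addrI (tau (fun=> 0))); by rewrite addr0 [RHS]e mul1r.
  by rewrite -e2; congr tau; apply: funext => x; rewrite big_ord0.
rewrite big_ord_recr /= -IH -(mul1r (tau (fun x => (h k x)%:C%C))) addrC -lin.
- by congr tau; apply: funext => x; rewrite big_ord_recr /= mul1r addrC.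
- exact: ccont_real.
- have -> : (fun x => \sum_(j < k) (h j x)%:C%C) = (fun x => (\sum_(j < k) h j x)%:C%C).
    by apply: funext => x; rewrite rmorph_sum.
  exact/ccont_real/sum_cont.
Qed.

Lemma sup_const_lt (R : realType) (X : Type) (g : X -> R) (c eps : R) :
  (forall x, `|g x| = c) -> 0 < eps -> c < eps ->
  sup [set `|g x| | x in [set: X]] < eps.
Proof.
move=> hg he hc.
case: (pselect (exists x : X, True)) => [[x0 _]|nx].
  have -> : [set `|g x| | x in [set: X]] = [set c].
    apply/seteqP; split => t /=.
    - by case=> x _ <-.
    - by move=> ->; exists x0.
  by rewrite sup1.
have -> : [set `|g x| | x in [set: X]] = set0.
  apply/seteqP; split => t //=; case=> x _ _; apply: nx; by exists x.
by rewrite sup0.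
Qed.

Theorem corollary3p8 (R : realType) (X : metricType R)
  (hX : compact [set: X]) (f : X -> R) (hf : continuous f)
  (eps : R) (heps : 0 < eps) :
  exists (n : nat) (delta : R) (fs : 'I_n -> X -> R),
    [/\ (0 < n)%N /\ 0 < delta,
        (forall i, continuous (fs i)),
        (forall i, sup_norm (fun x => f x - fs i x) < eps),
        (forall x, #|[pred i : 'I_n | `|fs i x| < delta]|%:R / n%:R < eps) &
        (forall tau : (X -> R[i]) -> R[i], tracial_state tau ->
           (\sum_(i < n) tau (fun x => ((chi delta (fs i x))%:C)%C)) / n%:R
             < (eps%:C)%C)].
Proof.
set n := (Num.truncn eps^-1).+1.
have n0 : (0 < n)%N by [].
have nR : 0 < n%:R :> R by rewrite ltr0n.
have hn : 1 / n%:R < eps.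
  have := truncnS_gt (eps^-1); rewrite -/n => h.
  rewrite ltr_pdivrMr // mulrC -ltr_pdivrMr // div1r //.
set s := eps / n%:R.
have s0 : 0 < s by rewrite divr_gt0.
set d := s / 4.
have d0 : 0 < d by rewrite divr_gt0.
have ds : 2 * d < s by rewrite /d; lra.
have hchi : forall (j : nat), continuous (fun x => chi d (f x + j%:R * s)).
  move=> j x; apply: (@continuous_comp _ _ _ (fun x => f x + j%:R * s) (chi d)).
    apply: continuousD; [exact: hf | exact: cst_continuous].
  exact: chi_cont.
exists n, d, (fun i x => f x + (i : nat)%:R * s); split.
- by [].
- move=> i x; apply: (@continuousD _ _ _ f (fun _ => (i:nat)%:R * s)); [exact: hf | exact: cst_continuous].
- move=> i; rewrite /sup_norm /=.
  have hi : `|(i:nat)%:R * s| < eps.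
    rewrite ger0_norm; last by rewrite mulr_ge0 // ltW.
    have h1 : (i:nat)%:R / n%:R < 1 :> R by rewrite ltr_pdivrMr // mul1r ltr_nat.
    by rewrite /s mulrA mulrAC -[X in _ < X]mul1r ltr_pM2r.
  apply: (@sup_const_lt R X _ (`|(i:nat)%:R * s|)) => // x.
  by rewrite opprD addrA subrr add0r normrN.
- move=> x.
  have c := @card_small R n (f x) s d [pred i : 'I_n | `|f x + (i : nat)%:R * s| < d] s0 ds
     (fun i h => ltW h).
  apply: le_lt_trans hn; rewrite ler_wpM2r // ?invr_ge0 ?ler0n //.
  by rewrite lern1.
- move=> tau ht.
  have e := @tau_sum R X tau ht n _ hchi; rewrite /= in e; rewrite -e.
  set S := fun x => \sum_(j < n) chi d (f x + (j:nat)%:R * s).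
  have hS : forall x, S x <= 1.
    move=> x; rewrite /S; apply: le_trans; first by apply: ler_sum => i _; exact: chi_le.
    rewrite -big_mkcond /= sumr_const.
    have c := @card_small R n (f x) s d [pred i : 'I_n | `|f x + (i : nat)%:R * s| <= d] s0 ds
     (fun i h => h).
    by rewrite -mulr_natr mul1r lern1.
  have Sc : continuous S by exact: (@sum_cont R X n (fun j x => chi d (f x + j%:R * s)) hchi).
  have GE : (fun x => \sum_(j < n) (chi d (f x + (j:nat)%:R * s))%:C%C) = (fun x => (S x)%:C%C).
    by apply: funext => x; rewrite rmorph_sum.
  rewrite GE.
  have [lin pos t1 _] := ht.
  have hle : tau (fun x => (S x)%:C%C) <= 1.
    have := lin (-1) _ _ (@ccont_real R X S Sc) (@ccont_real R X _ (@cst_continuous X R 1)).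
    rewrite t1 mulN1r => e1.
    have E2 : (fun x => -1 * (S x)%:C%C + (1:R)%:C%C) = (fun x => (1 - S x)%:C%C).
      by apply: funext => x; rewrite mulN1r rmorphB rmorph1 addrC.
    have := pos (fun x => (1 - S x)%:C%C).
    rewrite -E2 e1 addrC subr_ge0; apply.
      rewrite E2; apply: ccont_real => x.
      have := @continuousB R R^o X (fun _ => 1) S x (@cst_continuous X R^o 1 x) (Sc x); exact.
    by move=> x; rewrite ler0c subr_ge0.
  apply: (@le_lt_trans _ _ (1 / n%:R)).
    by rewrite ler_wpM2r // invr_ge0 ler0n.
  have -> : (1 / n%:R : R[i]) = (1 / n%:R)%:C%C by rewrite fmorph_div rmorph1 rmorph_nat.
  by rewrite ltcR.
Qed.
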